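(* There is no constant $c$ such that every graph in the class $\mathcal{R}_3$ is $c$-colorable.
   Context: All graphs are finite and simple. For a word $w$ and distinct letters $x,y$ occurring in $w$, $x$ and $y$ alternate in $w$ if deleting all letters other than copies of $x$ and $y$ yields a word of the form $xyxy\cdots$ or $yxyx\cdots$ (of even or odd length). A graph $G=(V,E)$ is word-representable if there is a word $w$ over $V$ (each vertex occurring in $w$) such that for all distinct $x,y\in V$, $x$ and $y$ alternate in $w$ iff $(x,y)\in E$. A word is $k$-uniform if each letter occurs exactly $k$ times; $G$ is $k$-word-representable if some $k$-uniform word represents it; the representation number of a word-representable graph is the least such $k$. $\mathcal{R}_3$ is the class of word-representable graphs with representation number exactly $3$. *)

(* Defs.v *)
From mathcomp Require Import all_boot.
Set Implicit Arguments. Unset Strict Implicit. Unset Printing Implicit Defensive.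

Definition simple_graph (T : finType) (e : rel T) : Prop :=
  symmetric e /\ irreflexive e.

(* x and y alternate in w: the subword of copies of x and y has no two
   consecutive equal letters, i.e. it is of the form xyxy... or yxyx... *)
Definition alternate (T : finType) (w : seq T) (x y : T) : bool :=
  sorted (fun a b => a != b) [seq z <- w | (z == x) || (z == y)].

Definition represents (T : finType) (e : rel T) (w : seq T) : Prop :=
  (forall v : T, v \in w) /\
  (forall x y : T, x != y -> (alternate w x y <-> e x y)).

Definition word_representable (T : finType) (e : rel T) : Prop :=
  exists w : seq T, represents e w.

Definition k_uniform (T : finType) (k : nat) (w : seq T) : Prop :=
  forall v : T, count_mem v w = k.

Definition k_word_representable (T : finType) (e : rel T) (k : nat) : Prop :=
  exists w : seq T, k_uniform k w /\ represents e w.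

Definition representation_number_is (T : finType) (e : rel T) (k : nat) : Prop :=
  word_representable e /\ 0 < k /\ k_word_representable e k /\
  (forall j, 0 < j < k -> ~ k_word_representable e j).

Definition in_R3 (T : finType) (e : rel T) : Prop :=
  simple_graph e /\ representation_number_is e 3.

Definition colorable (T : finType) (e : rel T) (c : nat) : Prop :=
  exists f : T -> 'I_c, forall x y : T, e x y -> f x != f y.

(* Main.v *)
Require Import Defs.
From mathcomp Require Import all_boot.
Set Implicit Arguments. Unset Strict Implicit. Unset Printing Implicit Defensive.

Section Search.
Variables (T : finType) (L : seq T) (eqb : T -> T -> bool) (e : rel T) (k : nat).
Hypothesis HL : forall a : T, a \in L.
Hypothesis Heqb : forall a b, eqb a b = (a == b).
Definition cnt a (w : seq T) := count (fun x => eqb x a) w.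
Definition alt (w : seq T) a b :=
  sorted (fun x y => ~~ eqb x y) [seq z <- w | eqb z a || eqb z b].
Lemma cntE a w : cnt a w = count_mem a w.
Proof. by apply: eq_count => x; rewrite Heqb. Qed.
Lemma altE w a b : alt w a b = alternate w a b.
Proof.
rewrite /alt /alternate.
have -> : [seq z <- w | eqb z a || eqb z b] = [seq z <- w | (z == a) || (z == b)].
  by apply: eq_filter => z; rewrite !Heqb.
by apply: eq_sorted => x y; rewrite Heqb.
Qed.
Definition okb (w : seq T) :=
  all (fun a => cnt a w == k) L &&
  all (fun a => all (fun b => (~~ eqb a b) ==> (alt w a b == e a b)) L) L.
Definition prune (q : seq T) (a : T) :=
  (cnt a q <= k) &&
  all (fun b => (~~ eqb a b) && e a b ==> alt q a b) L.
Fixpoint srch (n : nat) (pre : seq T) : bool :=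
  if n is n'.+1 then
    has (fun a => if prune (rcons pre a) a then srch n' (rcons pre a) else false) L
  else okb pre.

Lemma prune_prefix q r a : okb (q ++ r) -> prune q a.
Proof.
case/andP=> /allP Hc /allP Ha; apply/andP; split.
  have := Hc a (HL a); rewrite !cntE count_cat => /eqP <-; exact: leq_addr.
apply/allP=> b bL; apply/implyP=> /andP[nab eab].
have := Ha a (HL a) => /allP /(_ b bL); rewrite nab /= eab !altE => /eqP.
rewrite /alternate filter_cat.
case: (filter _ q) => //= x s; rewrite cat_path => /andP[] //.
Qed.

Lemma srch_complete n p s : size s = n -> okb (p ++ s) -> srch n p.
Proof.
elim: n p s => [|n IH] p [|a s] //=; first by rewrite cats0.
move=> [Hs] Hok; apply/hasP; exists a; first exact: HL.
have Heq : p ++ a :: s = rcons p a ++ s by rewrite cat_rcons.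
rewrite Heq in Hok; rewrite (prune_prefix a Hok); exact: IH Hs Hok.
Qed.

Lemma size_sum (s : seq T) : size s = \sum_(a : T) count_mem a s.
Proof.
elim: s => [|x s IH]; first by rewrite big1.
rewrite /= IH big_split /= -add1n; congr (_ + _).
rewrite (bigD1 x) //= eqxx big1 // => a; rewrite eq_sym => /negbTE ->. by [].
Qed.

Lemma okb_srch w : okb w -> srch (#|T| * k) [::].
Proof.
move=> Hok; apply: (@srch_complete _ [::] w) => //.
rewrite size_sum; case/andP: Hok => /allP Hc _.
rewrite (eq_bigr (fun _ => k)); last by move=> a _; rewrite -cntE; apply/eqP; exact: Hc.
by rewrite sum_nat_const.
Qed.
End Search.

Definition o0 : 'I_6 := @Ordinal 6 0 isT.
Definition o1 : 'I_6 := @Ordinal 6 1 isT.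
Definition o2 : 'I_6 := @Ordinal 6 2 isT.
Definition o3 : 'I_6 := @Ordinal 6 3 isT.
Definition o4 : 'I_6 := @Ordinal 6 4 isT.
Definition o5 : 'I_6 := @Ordinal 6 5 isT.
Definition L6 := [:: o0; o1; o2; o3; o4; o5].
Lemma L6P (a : 'I_6) : a \in L6.
Proof. by case: a => [[|[|[|[|[|[|]]]]]]] // ?; apply/eqP/val_inj. Qed.

Definition eqo (a b : 'I_6) := eqn (nat_of_ord a) (nat_of_ord b).
Definition pr : rel 'I_6 := fun a b =>
  (a != b) && (((a < 3) == (b < 3)) || (a %% 3 == b %% 3)).
Definition u : seq 'I_6 := [:: o0;o1;o2;o3;o0;o4;o1;o5;o2;o3;o0;o4;o5;o3;o1;o4;o2;o5].

Lemma u_ok : okb L6 eqo pr 3 u. Proof. vm_compute; reflexivity. Qed.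
Lemma no1 : srch L6 eqo pr 1 (6 * 1) [::] = false. Proof. vm_compute; reflexivity. Qed.
Lemma no2 : srch L6 eqo pr 2 (6 * 2) [::] = false. Proof. vm_compute; reflexivity. Qed.
Lemma u_filt : all (fun a => filter (pred1 a) u == nseq 3 a) L6. Proof. by vm_compute. Qed.
Lemma u_mem : all (fun a => a \in u) L6. Proof. vm_compute; reflexivity. Qed.


Arguments u : simpl never.
Arguments srch : simpl never.
Arguments okb : simpl never.
Arguments L6 : simpl never.
Arguments pr : simpl never.
Lemma eqoP a b : eqo a b = (a == b). Proof. by []. Qed.

Section Main.
Variable n : nat.
Definition GT := ('I_6 + 'I_n)%type.
Definition G : rel GT := fun x y =>
  match x, y with inl a, inl b => pr a b | inr a, inr b => a != b | _, _ => false end.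
Definition W : seq GT := map inl u ++ (map inr (enum 'I_n) ++ map inr (enum 'I_n) ++ map inr (enum 'I_n)).
Lemma pr_sym a b : pr a b = pr b a.
Proof. by rewrite /pr eq_sym (eq_sym (a < 3)) (eq_sym (a %% 3)). Qed.

Lemma G_simple : simple_graph G.
Proof.
split.
  by case=> a [] b //=; [rewrite pr_sym | rewrite eq_sym].
by case=> a /=; [rewrite /pr eqxx | rewrite eqxx].
Qed.

Lemma sorted_inl (s : seq 'I_6) :
  sorted (fun x y : GT => x != y) (map inl s) = sorted (fun x y => x != y) s.
Proof. rewrite sorted_map; apply: eq_sorted => x y; reflexivity. Qed.
Lemma sorted_inr (s : seq 'I_n) :
  sorted (fun x y : GT => x != y) (map inr s) = sorted (fun x y => x != y) s.
Proof. rewrite sorted_map; apply: eq_sorted => x y; reflexivity. Qed.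

Lemma filt_inl (s : seq 'I_6) (P : pred GT) :
  filter P (map inl s) = map inl (filter (fun z => P (inl z)) s).
Proof. by elim: s => //= c s ->; case: ifP. Qed.
Lemma filt_inr (s : seq 'I_n) (P : pred GT) :
  filter P (map inr s) = map inr (filter (fun z => P (inr z)) s).
Proof. by elim: s => //= c s ->; case: ifP. Qed.
Lemma filt_nil (T : Type) (P : pred T) s : (forall z, P z = false) -> filter P s = [::].
Proof. by move=> H; elim: s => //= z s ->; rewrite H. Qed.

Lemma u_cnt a : count_mem a u = 3.
Proof. have /andP[/allP H _] := u_ok. by have /eqP := H a (L6P a); rewrite (cntE eqoP). Qed.
Lemma u_alt a b : a != b -> alternate u a b = pr a b.
Proof.
move=> nab; have /andP[_ /allP H] := u_ok.
have /allP := H a (L6P a) => /(_ b (L6P b)); rewrite eqoP nab /= => /eqP.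
by rewrite (altE eqoP).
Qed.
Lemma u_f a : filter (pred1 a) u = nseq 3 a.
Proof. by have /allP/(_ a (L6P a))/eqP := u_filt. Qed.

Lemma W_rep : represents G W.
Proof.
split.
  case=> a; rewrite !mem_cat.
    by rewrite mem_map ?(allP u_mem _ (L6P a)) //; move=> x y [].
  by rewrite mem_map ?mem_enum ?orbT //; move=> x y [].
move=> x y nxy; rewrite /alternate /W !filter_cat !filt_inl !filt_inr.
case: x y nxy => a [] b nab.
- have E1 : [seq i <- enum 'I_n | (inr i == inl a :> GT) || (inr i == inl b)] = [::]
    by apply: filt_nil.
  have E2 : [seq i <- u | (inl i == inl a :> GT) || (inl i == inl b)]
            = [seq i <- u | (i == a) || (i == b)].
    by move: u; elim=> //= c s ->.
  rewrite E1 E2 !cats0 sorted_inl.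
  have nab'' : a != b by [].
  have := u_alt nab''; rewrite /alternate => ->.
  exact: iff_refl.
- have E2 : [seq i <- u | (inl i == inl a :> GT) || (inl i == inr b)] = nseq 3 a.
    by rewrite -u_f; move: u; elim=> //= c s ->; rewrite orbF.
  by rewrite E2 /= eqxx.
- have E2 : [seq i <- u | (inl i == inr a :> GT) || (inl i == inl b)] = nseq 3 b.
    by rewrite -u_f; move: u; elim=> //= c s ->.
  by rewrite E2 /= eqxx.
- have E1 : [seq i <- u | (inl i == inr a :> GT) || (inl i == inr b)] = [::]
    by apply: filt_nil.
  have E2 : [seq i <- enum 'I_n | (inr i == inr a :> GT) || (inr i == inr b)]
            = [seq i <- enum 'I_n | (i == a) || (i == b)].
    by move: (enum 'I_n); elim=> //= c s ->.
  rewrite E1 E2 /= -!map_cat sorted_inr.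
  have nab' : a != b by [].
  have [x [y [nxy ->]]] : exists x y, x != y /\
      [seq i <- enum 'I_n | (i == a) || (i == b)] = [:: x; y].
    have Uq := filter_uniq (fun i => (i == a) || (i == b)) (enum_uniq 'I_n).
    have Sq : size [seq i <- enum 'I_n | (i == a) || (i == b)] = 2.
      have Pq : perm_eq [seq i <- enum 'I_n | (i == a) || (i == b)] [:: a; b].
        apply: uniq_perm => //; first by rewrite /= inE andbT.
        by move=> z; rewrite mem_filter mem_enum andbT !inE.
      by rewrite (perm_size Pq).
    move: Uq Sq; case: [seq _ <- _ | _] => [|x [|y [|]]] //= /andP[].
    by rewrite inE => nxy _ _; exists x, y.
  by rewrite /= nxy eq_sym nxy.
Qed.

Lemma cnt_map_l (T1 T2 : eqType) (s : seq T1) (x : T1) :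
  count_mem (@inl T1 T2 x) (map inl s) = count_mem x s.
Proof. by elim: s => //= c s ->. Qed.

Lemma W_unif : k_uniform 3 W.
Proof.
case=> a; rewrite /W !count_cat.
  rewrite cnt_map_l u_cnt.
  have H : count_mem (inl a : GT) (map inr (enum 'I_n)) = 0.
    by elim: (enum 'I_n).
  by rewrite H.
have H0 : count_mem (inr a : GT) (map inl u) = 0.
  by move: u; elim=> //= c s ->.
have H : count_mem (inr a : GT) (map inr (enum 'I_n)) = 1.
  have -> : count_mem (inr a : GT) (map inr (enum 'I_n)) = count_mem a (enum 'I_n).
    by elim: (enum 'I_n) => //= c s ->.
  by rewrite count_uniq_mem ?enum_uniq ?mem_enum.
by rewrite H0 H.
Qed.

Definition getl (z : GT) : option 'I_6 := if z is inl a then Some a else None.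

Lemma cnt_restr a (w : seq GT) : count_mem a (pmap getl w) = count_mem (inl a : GT) w.
Proof. by elim: w => //= [[c|c]] s IH /=; rewrite IH. Qed.

Lemma filt_restr a b (w : seq GT) :
  map inl [seq z <- pmap getl w | (z == a) || (z == b)] =
  [seq z <- w | (z == inl a) || (z == inl b)].
Proof. by elim: w => //= [[c|c]] s IH /=; rewrite -IH //; case: ifP. Qed.

Lemma restr_okb j (w : seq GT) : k_uniform j w -> represents G w ->
  okb L6 eqo pr j (pmap getl w).
Proof.
move=> Hu [_ Hr]; apply/andP; split; apply/allP=> a _.
  by rewrite (cntE eqoP) cnt_restr Hu.
apply/allP=> b _; apply/implyP; rewrite eqoP => nab.
have nab' : (inl a : GT) != inl b by [].
have := Hr _ _ nab'; rewrite (altE eqoP) /alternate -filt_restr sorted_inl => H.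
apply/eqP; apply/idP/idP => Hx; [exact: (proj1 H Hx) | exact: (proj2 H Hx)].
Qed.

Lemma not_rep j : 0 < j < 3 -> ~ k_word_representable G j.
Proof.
case/andP=> j0 j3 [w [Hu Hr]].
have := okb_srch L6P eqoP (restr_okb Hu Hr).
rewrite card_ord.
case: j j0 j3 {Hu} => [|[|[|j]]] j0 j3 H.
- by [].
- by rewrite no1 in H.
- by rewrite no2 in H.
- by [].
Qed.

Lemma G_R3 : in_R3 G.
Proof.
split; first exact: G_simple.
split; first by exists W; exact: W_rep.
split=> //; split; first by exists W; split; [exact: W_unif | exact: W_rep].
exact: not_rep.
Qed.
End Main.

Lemma not_col c : ~ colorable (@G c.+1) c.
Proof.
case=> f Hf.
have inj : injective (fun b : 'I_c.+1 => f (inr b)).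
  move=> x y Hxy; apply/eqP; apply/negPn/negP => nxy.
  by have := Hf (inr x) (inr y) nxy; rewrite Hxy eqxx.
by have := leq_card _ inj; rewrite !card_ord ltnn.
Qed.

Theorem theorem18 :
  ~ (exists c : nat, forall (T : finType) (e : rel T), in_R3 e -> colorable e c).
Proof. by case=> c Hc; apply: (not_col (c:=c)); apply: Hc; apply: G_R3. Qed.
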